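(* Consider a random family with random number of children $N\ge 1$ and sexes $S_1,S_2,\dots\in\{\mathrm{M},\mathrm{F}\}$ of its children in birth order ($S_k$ defined on the event $N\ge k$). Assume: (i) (random coin toss) there is $p_M\in(0,1)$ such that $P(S_1=\mathrm{M})=p_M$ and, for every $k\ge 2$, $P(S_k=\mathrm{M}\mid N\ge k, S_1,\dots,S_{k-1})=p_M$; write $p_F=1-p_M$; (ii) the sex of the first child does not predict whether the family has a second child: $P(N\ge 2\mid S_1=\mathrm{M})=P(N\ge2\mid S_1=\mathrm{F})$; (iii) there are numbers $p_S>0$ and $p_D$ with $P(N\ge 3\mid N\ge 2, S_1=S_2=\mathrm{M})=P(N\ge 3\mid N\ge 2, S_1=S_2=\mathrm{F})=p_S$ and $P(N\ge 3\mid N\ge 2, S_1=\mathrm{M},S_2=\mathrm{F})=P(N\ge 3\mid N\ge 2, S_1=\mathrm{F},S_2=\mathrm{M})=p_D$. Then \[ P\left(\text{MMM or FFF}\mid N\geq 3\right)=\left(p_M^3+p_F^3\right)\frac{1}{2 p_Fp_M p_D/p_S +p_F^2+p_M^2}. \] If additionally $p_S>p_D$, then the inflation factor satisfies \[ \frac{1}{2 p_Fp_M p_D/p_S +p_F^2+p_M^2}>1. \]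
   Context: All births are singletons. ''MMM'' denotes the event $N\ge 3$ and $S_1=S_2=S_3=\mathrm{M}$; ''FFF'' denotes $N\ge3$ and $S_1=S_2=S_3=\mathrm{F}$. All conditioning events appearing are assumed to have positive probability. *)

(* Defs.v *)
From HB Require Import structures.
From mathcomp Require Import all_boot all_order all_algebra.
From mathcomp Require Import all_classical all_reals all_analysis.
Set Implicit Arguments. Unset Strict Implicit. Unset Printing Implicit Defensive.
Import Order.TTheory GRing.Theory Num.Theory.
Local Open Scope classical_set_scope.
Local Open Scope ring_scope.

Definition Pr (d : measure_display) (T : measurableType d) (R : realType)
  (P : probability T R) (A : set T) : R := fine (P A).

Definition condP (d : measure_display) (T : measurableType d) (R : realType)
  (P : probability T R) (A B : set T) : R := Pr P (A `&` B) / Pr P B.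

(* Sexes encoded as booleans: true = M, false = F. Children are indexed from 1.
   sex_prefix S s = event that S_1,...,S_(size s) equal the entries of s. *)
Definition sex_prefix (T : Type) (S : nat -> T -> bool) (s : seq bool) : set T :=
  [set w | forall i, (i < size s)%N -> S i.+1 w = nth false s i].

(* Main.v *)
Require Import Defs.
From HB Require Import structures.
From mathcomp Require Import all_boot all_order all_algebra.
From mathcomp Require Import all_classical all_reals all_analysis.
From mathcomp Require Import lra ring.
Import Order.TTheory GRing.Theory Num.Theory.
Local Open Scope classical_set_scope.
Local Open Scope ring_scope.
Set Implicit Arguments.

Lemma Pr_ge0 (d : measure_display) (T : measurableType d) (R : realType) (P : probability T R) A : 0 <= Pr P A.
Proof. by rewrite /Pr fine_ge0. Qed.

Lemma PrU (d : measure_display) (T : measurableType d) (R : realType) (P : probability T R) A B : measurable A -> measurable B -> A `&` B = set0 ->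
  Pr P (A `|` B) = Pr P A + Pr P B.
Proof.
move=> mA mB AB; rewrite /Pr measureU // fineD //; exact: fin_num_measure.
Qed.

Lemma Pr_split (d : measure_display) (T : measurableType d) (R : realType) (P : probability T R) A B : measurable A -> measurable B ->
  Pr P A = Pr P (A `&` B) + Pr P (A `&` ~` B).
Proof.
move=> mA mB; rewrite -PrU; first by rewrite -setIUr setUCr setIT.
- exact: measurableI.
- by apply: measurableI => //; apply: measurableC.
- by apply/seteqP; split => w //= [[_ h1] [_ h2]].
Qed.

Lemma Pr_ext (d : measure_display) (T : measurableType d) (R : realType) (P : probability T R) A B : (forall w, A w <-> B w) -> Pr P A = Pr P B.
Proof. by move=> h; congr Pr; apply/seteqP; split => w /h. Qed.

Lemma Pr_setT (d : measure_display) (T : measurableType d) (R : realType) (P : probability T R) : Pr P setT = 1.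
Proof. by rewrite /Pr probability_setT. Qed.

Lemma condP_mul (d : measure_display) (T : measurableType d) (R : realType) (P : probability T R) A B c : condP P A B = c -> 0 < Pr P B -> Pr P (A `&` B) = c * Pr P B.
Proof. by rewrite /condP => <- h; rewrite divfK // gt_eqF. Qed.

Lemma pref_rcons (T : Type) (S : nat -> T -> bool) s b :
  sex_prefix S (rcons s b) = sex_prefix S s `&` [set w | S (size s).+1 w = b].
Proof.
apply/seteqP; split => w /=.
- move=> h; split.
  + move=> i hi; have := h i; rewrite size_rcons nth_rcons hi; apply; exact: ltnW.
  + have := h (size s); rewrite size_rcons nth_rcons ltnn eqxx; exact.
- move=> [h1 h2] i; rewrite size_rcons ltnS nth_rcons leq_eqVlt.
  case/orP => [/eqP ->|hi]; first by rewrite ltnn eqxx.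
  by rewrite hi; apply: h1.
Qed.

Lemma pref_nil (T : Type) (S : nat -> T -> bool) : sex_prefix S [::] = setT.
Proof. by apply/seteqP; split => w //= _ i. Qed.

Lemma pref_meas d (T : measurableType d) (S : nat -> T -> bool) s :
  (forall k, measurable [set w | S k w]) -> measurable (sex_prefix S s).
Proof.
move=> mS; elim/last_ind: s => [|s b IH]; first by rewrite pref_nil.
rewrite pref_rcons; apply: measurableI => //.
case: b; first exact: mS.
have -> : [set w | S (size s).+1 w = false] = ~` [set w | S (size s).+1 w].
  by apply/seteqP; split => w /=; case: (S _ w).
exact: measurableC.
Qed.

Definition g (d : measure_display) (T : measurableType d) (R : realType) (P : probability T R)
  (N : T -> nat) (S : nat -> T -> bool) n s :=
  Pr P ([set w | (n <= N w)%N] `&` sex_prefix S s).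

Lemma g_split (d : measure_display) (T : measurableType d) (R : realType) (P : probability T R)
  (N : T -> nat) (S : nat -> T -> bool)
  (mN : forall k, measurable [set w | (k <= N w)%N])
  (mS : forall k, measurable [set w | S k w]) n s :
  g P N S n s = g P N S n (rcons s true) + g P N S n (rcons s false).
Proof.
rewrite /g (@Pr_split _ _ _ P _ [set w | S (size s).+1 w]); last by [].
- congr (_ + _); apply: Pr_ext => w; rewrite pref_rcons /=.
  + by split => [[[? ?] ?]|[? [? ?]]].
  + split => [[[? ?] /negP/negbTE ?]|[? [? h]]]; first by [].
    by split; [split|rewrite h].
- apply: measurableI => //. exact: pref_meas.
Qed.

Lemma g_ge0 (d : measure_display) (T : measurableType d) (R : realType) (P : probability T R)
  N S n s : 0 <= g P N S n s.
Proof. exact: Pr_ge0. Qed.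

Lemma g_coinT (d : measure_display) (T : measurableType d) (R : realType) (P : probability T R)
  (N : T -> nat) (S : nat -> T -> bool)
  (mN : forall k, measurable [set w | (k <= N w)%N])
  (mS : forall k, measurable [set w | S k w]) (pM : R)
  (coin : forall (k : nat) (s : seq bool), (2 <= k)%N -> size s = k.-1 ->
     0 < Pr P ([set w | (k <= N w)%N] `&` sex_prefix S s) ->
     condP P [set w | S k w] ([set w | (k <= N w)%N] `&` sex_prefix S s) = pM)
  n s : (2 <= n)%N -> size s = n.-1 -> g P N S n (rcons s true) = pM * g P N S n s.
Proof.
move=> hn hs; have := g_ge0 P N S n s; rewrite le_eqVlt => /orP [/eqP h0|hp].
  have := @g_split _ _ _ P N S mN mS n s; rewrite -h0 => e.
  have h1 := g_ge0 P N S n (rcons s true); have h2 := g_ge0 P N S n (rcons s false).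
  rewrite mulr0; apply/eqP; rewrite eq_le h1 andbT; lra.
have := @condP_mul _ _ _ P _ _ _ (coin n s hn hs hp) hp; rewrite -/(g P N S n s) => <-.
rewrite /g; apply: Pr_ext => w; rewrite pref_rcons hs prednK ?(ltnW hn) //=.
  by split => [[? [? ?]]|[? [? ?]]].
Qed.

Lemma g_coinF (d : measure_display) (T : measurableType d) (R : realType) (P : probability T R)
  (N : T -> nat) (S : nat -> T -> bool)
  (mN : forall k, measurable [set w | (k <= N w)%N])
  (mS : forall k, measurable [set w | S k w]) (pM : R)
  (coin : forall (k : nat) (s : seq bool), (2 <= k)%N -> size s = k.-1 ->
     0 < Pr P ([set w | (k <= N w)%N] `&` sex_prefix S s) ->
     condP P [set w | S k w] ([set w | (k <= N w)%N] `&` sex_prefix S s) = pM)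
  n s : (2 <= n)%N -> size s = n.-1 -> g P N S n (rcons s false) = (1 - pM) * g P N S n s.
Proof.
move=> hn hs; have := @g_split _ _ _ P N S mN mS n s; rewrite (@g_coinT _ _ _ P N S mN mS pM coin) // => e; lra.
Qed.

Lemma pref1E (T : Type) (S : nat -> T -> bool) b1 w :
  sex_prefix S [:: b1] w = (S 1%N w = b1).
Proof.
apply: propext; split; first by move=> h; exact: (h 0%N).
by move=> h [|//] _.
Qed.
Lemma pref2E (T : Type) (S : nat -> T -> bool) b1 b2 w :
  sex_prefix S [:: b1; b2] w = (S 1%N w = b1 /\ S 2%N w = b2).
Proof.
apply: propext; split; first by move=> h; split; [exact: (h 0%N)|exact: (h 1%N)].
by move=> [h1 h2] [|[|//]] _.
Qed.
Lemma pref3E (T : Type) (S : nat -> T -> bool) b1 b2 b3 w :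
  sex_prefix S [:: b1; b2; b3] w = (S 1%N w = b1 /\ S 2%N w = b2 /\ S 3%N w = b3).
Proof.
apply: propext; split.
  by move=> h; split; [exact: (h 0%N)|split; [exact: (h 1%N)|exact: (h 2%N)]].
by move=> [h1 [h2 h3]] [|[|[|//]]] _.
Qed.

Lemma pref0E (T : Type) (S : nat -> T -> bool) w :
  sex_prefix S [::] w = True.
Proof. by rewrite pref_nil. Qed.

Lemma conv_mul d (T : measurableType d) (R : realType) (P : probability T R)
  (A B : set T) c a b :
  condP P A B = c -> 0 < Pr P B -> Pr P B = b -> Pr P (A `&` B) = a -> a = c * b.
Proof. move=> h1 h2 h3 h4; rewrite -h4 -h3; exact: condP_mul. Qed.

Ltac sset hN S N :=
  let w := fresh "w" in
  move=> w /=; rewrite ?pref0E ?pref1E ?pref2E ?pref3E;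
  have := hN w; have : (3 <= N w)%N -> (2 <= N w)%N := fun h => ltnW h;
  case: (S 1%N w); case: (S 2%N w); case: (S 3%N w) => /=;
  unfold is_true in *; intuition congruence.

Unset Implicit Arguments.

Theorem corollary1 (d : measure_display) (T : measurableType d) (R : realType)
  (P : probability T R) (N : T -> nat) (S : nat -> T -> bool)
  (pM pS pD : R) :
  (forall w, (1 <= N w)%N) ->
  (forall k, measurable [set w | (k <= N w)%N]) ->
  (forall k, measurable [set w | S k w]) ->
  (* (i) random coin toss *)
  0 < pM < 1 ->
  Pr P [set w | S 1%N w] = pM ->
  (forall (k : nat) (s : seq bool), (2 <= k)%N -> size s = k.-1 ->
     0 < Pr P ([set w | (k <= N w)%N] `&` sex_prefix S s) ->
     condP P [set w | S k w] ([set w | (k <= N w)%N] `&` sex_prefix S s) = pM) ->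
  (* (ii) *)
  0 < Pr P [set w | S 1%N w] -> 0 < Pr P [set w | ~~ S 1%N w] ->
  condP P [set w | (2 <= N w)%N] [set w | S 1%N w] =
  condP P [set w | (2 <= N w)%N] [set w | ~~ S 1%N w] ->
  (* (iii) *)
  0 < pS ->
  0 < Pr P [set w | (2 <= N w)%N /\ S 1%N w /\ S 2%N w] ->
  0 < Pr P [set w | (2 <= N w)%N /\ ~~ S 1%N w /\ ~~ S 2%N w] ->
  0 < Pr P [set w | (2 <= N w)%N /\ S 1%N w /\ ~~ S 2%N w] ->
  0 < Pr P [set w | (2 <= N w)%N /\ ~~ S 1%N w /\ S 2%N w] ->
  condP P [set w | (3 <= N w)%N] [set w | (2 <= N w)%N /\ S 1%N w /\ S 2%N w] = pS ->
  condP P [set w | (3 <= N w)%N] [set w | (2 <= N w)%N /\ ~~ S 1%N w /\ ~~ S 2%N w] = pS ->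
  condP P [set w | (3 <= N w)%N] [set w | (2 <= N w)%N /\ S 1%N w /\ ~~ S 2%N w] = pD ->
  condP P [set w | (3 <= N w)%N] [set w | (2 <= N w)%N /\ ~~ S 1%N w /\ S 2%N w] = pD ->
  (* conditioning event of the conclusion *)
  0 < Pr P [set w | (3 <= N w)%N] ->
  let pF := 1 - pM in
  let infl := 1 / (2 * pF * pM * pD / pS + pF ^+ 2 + pM ^+ 2) in
  condP P ([set w | (3 <= N w)%N /\ S 1%N w /\ S 2%N w /\ S 3%N w] `|`
           [set w | (3 <= N w)%N /\ ~~ S 1%N w /\ ~~ S 2%N w /\ ~~ S 3%N w])
        [set w | (3 <= N w)%N]
    = (pM ^+ 3 + pF ^+ 3) * infl
  /\ (pD < pS -> 1 < infl).
Proof.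
move=> hN mN mS /andP[pM0 pM1] hPM coin hP1 hP1F hii pS0 ptt pff ptf pft
  hTT hFF hTF hFT hP3 pF infl.
pose G := @g _ _ _ P N S.
have e1T : Pr P [set w | S 1%N w] = G 1%N [:: true] by apply: Pr_ext; sset hN S N.
have e1F : Pr P [set w | ~~ S 1%N w] = G 1%N [:: false] by apply: Pr_ext; sset hN S N.
have e1 : G 1%N [::] = 1.
  rewrite -(@Pr_setT _ _ _ P); apply: Pr_ext => w; rewrite pref_nil; have := hN w; by [].
have s1 : G 1%N [::] = G 1%N [:: true] + G 1%N [:: false] := @g_split _ _ _ P N S mN mS 1 [::].
have e2T : Pr P ([set w | (2 <= N w)%N] `&` [set w | S 1%N w]) = G 2%N [:: true].
  by apply: Pr_ext; sset hN S N.
have e2F : Pr P ([set w | (2 <= N w)%N] `&` [set w | ~~ S 1%N w]) = G 2%N [:: false].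
  by apply: Pr_ext; sset hN S N.
have hGt : G 1%N [:: true] = pM by rewrite -e1T.
have hGf : G 1%N [:: false] = pF by rewrite /pF -hGt -e1 s1; ring.
have pF0 : 0 < pF by rewrite /pF subr_gt0.
rewrite /condP e2T e2F e1T e1F hGt hGf in hii.
pose q := G 2%N [:: true] / pM.
have h2T : G 2%N [:: true] = q * pM by rewrite /q divfK // gt_eqF.
have h2F : G 2%N [:: false] = q * pF by rewrite /q hii divfK // gt_eqF.
have cT n s (hn : (2 <= n)%N) (hs : size s = n.-1) :=
  @g_coinT _ _ _ P N S mN mS pM coin n s hn hs.
have cF n s (hn : (2 <= n)%N) (hs : size s = n.-1) :=
  @g_coinF _ _ _ P N S mN mS pM coin n s hn hs.
have c2tt : G 2%N [:: true; true] = pM * G 2%N [:: true] := cT 2%N [:: true] erefl erefl.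
have c2tf : G 2%N [:: true; false] = pF * G 2%N [:: true] := cF 2%N [:: true] erefl erefl.
have c2ft : G 2%N [:: false; true] = pM * G 2%N [:: false] := cT 2%N [:: false] erefl erefl.
have c2ff : G 2%N [:: false; false] = pF * G 2%N [:: false] := cF 2%N [:: false] erefl erefl.
have c3t : G 3%N [:: true; true; true] = pM * G 3%N [:: true; true] :=
  cT 3%N [:: true; true] erefl erefl.
have c3f : G 3%N [:: false; false; false] = pF * G 3%N [:: false; false] :=
  cF 3%N [:: false; false] erefl erefl.
have t3tt : G 3%N [:: true; true] = pS * G 2%N [:: true; true].
  by apply: (@conv_mul _ _ _ P _ _ _ _ _ hTT ptt); apply: Pr_ext; sset hN S N.
have t3ff : G 3%N [:: false; false] = pS * G 2%N [:: false; false].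
  by apply: (@conv_mul _ _ _ P _ _ _ _ _ hFF pff); apply: Pr_ext; sset hN S N.
have t3tf : G 3%N [:: true; false] = pD * G 2%N [:: true; false].
  by apply: (@conv_mul _ _ _ P _ _ _ _ _ hTF ptf); apply: Pr_ext; sset hN S N.
have t3ft : G 3%N [:: false; true] = pD * G 2%N [:: false; true].
  by apply: (@conv_mul _ _ _ P _ _ _ _ _ hFT pft); apply: Pr_ext; sset hN S N.
have s3 : G 3%N [::] = G 3%N [:: true] + G 3%N [:: false] := @g_split _ _ _ P N S mN mS 3 [::].
have s3t : G 3%N [:: true] = G 3%N [:: true; true] + G 3%N [:: true; false] :=
  @g_split _ _ _ P N S mN mS 3 [:: true].
have s3f : G 3%N [:: false] = G 3%N [:: false; true] + G 3%N [:: false; false] :=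
  @g_split _ _ _ P N S mN mS 3 [:: false].
have e3 : Pr P [set w | (3 <= N w)%N] = G 3%N [::] by apply: Pr_ext; sset hN S N.
have pD0 : 0 <= pD by rewrite -hTF /condP divr_ge0 // Pr_ge0.
have hD : G 3%N [::] = q * (pS * pM ^+ 2 + 2 * pD * pM * pF + pS * pF ^+ 2).
  rewrite s3 s3t s3f t3tt t3tf t3ft t3ff c2tt c2tf c2ft c2ff h2T h2F; ring.
split.
  rewrite /condP e3 (@Pr_ext _ _ _ P _
    (([set w | (3 <= N w)%N] `&` sex_prefix S [:: true; true; true]) `|`
     ([set w | (3 <= N w)%N] `&` sex_prefix S [:: false; false; false])));
    last by sset hN S N.
  rewrite PrU; first last.
  - apply/seteqP; split => w //=; rewrite !pref3E.
    by move=> [[_ [h _]] [_ [h' _]]]; move: h h'; case: (S 1%N w).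
  - by apply: measurableI => //; apply: pref_meas.
  - by apply: measurableI => //; apply: pref_meas.
  have -> : Pr P ([set w | (3 <= N w)%N] `&` sex_prefix S [:: true; true; true]) =
    G 3%N [:: true; true; true] by [].
  have -> : Pr P ([set w | (3 <= N w)%N] `&` sex_prefix S [:: false; false; false]) =
    G 3%N [:: false; false; false] by [].
  rewrite c3t c3f t3tt t3ff c2tt c2ff h2T h2F hD /infl.
  have hP3' := hP3; rewrite e3 hD in hP3'.
  set D := (pS * pM ^+ 2 + 2 * pD * pM * pF + pS * pF ^+ 2) in hP3' *.
  have Dpos : 0 < D.
    rewrite /D; have h1 : 0 < pS * pM ^+ 2 by rewrite mulr_gt0 // exprn_gt0.
    have h2 : 0 <= 2 * pD * pM * pF by rewrite !mulr_ge0 // ltW.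
    have h3 : 0 <= pS * pF ^+ 2 by rewrite mulr_ge0 // ?exprn_ge0 // ltW.
    lra.
  have q0 : q != 0 by apply/eqP => q0; rewrite q0 mul0r ltxx in hP3'.
  have pS0' : pS != 0 by rewrite gt_eqF.
  rewrite (_ : 2 * pF * pM * pD / pS + pF ^+ 2 + pM ^+ 2 = D / pS); last first.
    rewrite /D /pF; field => //.
  field; rewrite ?q0 ?pS0' ?gt_eqF //.
move=> hlt; rewrite /infl div1r.
have t1 : pD / pS < 1 by rewrite ltr_pdivrMr // mul1r.
have t0 : 0 <= pD / pS by rewrite divr_ge0 // ltW.
rewrite -!mulrA mulrA mulrA.
set t := pD / pS in t0 t1 *.
have hpm : 0 < pF * pM by rewrite mulr_gt0.
have hx : 0 < 2 * pF * pM * t + pF ^+ 2 + pM ^+ 2.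
  have a1 : 0 <= 2 * pF * pM * t.
    exact: mulr_ge0 (mulr_ge0 (mulr_ge0 (ler0n R 2) (ltW pF0)) (ltW pM0)) t0.
  have a2 : 0 < pM ^+ 2 by rewrite exprn_gt0.
  have a3 : 0 <= pF ^+ 2 by rewrite exprn_ge0 // ltW.
  lra.
rewrite invf_gt1 //.
have e : pF ^+ 2 + pM ^+ 2 = 1 - 2 * (pF * pM) by rewrite /pF; ring.
have a4 : 0 < (pF * pM) * (1 - t) by rewrite mulr_gt0 // subr_gt0.
have -> : 2 * pF * pM * t + pF ^+ 2 + pM ^+ 2 = 1 - 2 * ((pF * pM) * (1 - t)).
  rewrite /pF; ring.
lra.
Qed.
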